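(* Let $R$ be a $d$-variate tail copula, $d\ge2$, whose (right-hand) partial derivatives exist, and write $R(x,y)=R(x,y,\infty,\ldots,\infty)$ for its bivariate margin in the first two coordinates. For $g>0$ and $(x,y,\mathbf{z})\in[0,\infty)\times[0,\infty)\times[0,\infty)^{d-2}$, $$0\le\dot R_1(x,y+g,\mathbf{z})-\dot R_1(x,y,\mathbf{z})\le\dot R_1(x,y+g)-\dot R_1(x,y),$$ where $\dot R_1$ denotes the right-hand partial derivative with respect to the first argument (of the $d$-variate, respectively bivariate, function).
   Context: A $d$-variate tail copula is a function $R:[0,\infty)^d\to[0,\infty)$ with $R(\mathbf{x})=\lim_{s\downarrow0}s^{-1}\mathbb{P}\{V_1\le sx_1,\ldots,V_d\le sx_d\}$ for a random vector with uniform $(0,1)$ margins (the limit existing for all $\mathbf{x}$); it extends to arguments with some coordinates equal to $+\infty$ (not all) by dropping the corresponding events, i.e. $R(x,y,\infty,\ldots,\infty)=\lim_{s\downarrow0}s^{-1}\mathbb{P}\{V_1\le sx,V_2\le sy\}$. *)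

(* Defs.v *)
From Stdlib Require Import Reals Lra.
Open Scope R_scope.

(* Points of R^d are represented as functions nat -> R; only coordinates
   0..d-1 are meaningful. Extended points (coordinates possibly +infinity)
   are functions nat -> option R, with None standing for +infinity. *)

Definition upd (u : nat -> R) (i : nat) (a : R) : nat -> R :=
  fun j => if Nat.eq_dec j i then a else u j.

(* C-volume of the box [a,b] (first k coordinates), i.e. the alternating
   sum of C over the vertices; call with k = d. *)
Fixpoint vol (k : nat) (a b : nat -> R) (C : (nat -> R) -> R) (u : nat -> R) : R :=
  match k with
  | O => C u
  | S k' => vol k' a b C (upd u k' (b k')) - vol k' a b C (upd u k' (a k'))
  end.

Definition in_cube (d : nat) (u : nat -> R) : Prop :=
  forall i, (i < d)%nat -> 0 <= u i <= 1.

Definition is_copula (d : nat) (C : (nat -> R) -> R) : Prop :=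
  (forall u v, (forall i, (i < d)%nat -> u i = v i) -> C u = C v) /\
  (forall u, in_cube d u -> (exists i, (i < d)%nat /\ u i = 0) -> C u = 0) /\
  (forall u i, in_cube d u -> (i < d)%nat ->
     (forall j, (j < d)%nat -> j <> i -> u j = 1) -> C u = u i) /\
  (forall a b, in_cube d a -> in_cube d b ->
     (forall i, (i < d)%nat -> a i <= b i) -> 0 <= vol d a b C a).

(* Argument of C at scale s: s*x_i, or 1 (event dropped) if x_i = infinity. *)
Definition cval (s : R) (e : option R) : R :=
  match e with Some v => s * v | None => 1 end.

Definition nonneg_ext (d : nat) (x : nat -> option R) : Prop :=
  forall i, (i < d)%nat -> match x i with Some v => 0 <= v | None => True end.

Definition not_all_inf (d : nat) (x : nat -> option R) : Prop :=
  exists i, (i < d)%nat /\ x i <> None.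

Definition is_tail_copula (d : nat) (Rt : (nat -> option R) -> R) : Prop :=
  exists C, is_copula d C /\
    forall x, nonneg_ext d x -> not_all_inf d x ->
      forall eps, 0 < eps -> exists delta, 0 < delta /\
        forall s, 0 < s < delta ->
          Rabs (C (fun i => cval s (x i)) / s - Rt x) < eps.

Definition updx (x : nat -> option R) (i : nat) (a : R) : nat -> option R :=
  fun j => if Nat.eq_dec j i then Some a else x j.

Definition has_right_pderiv (F : (nat -> option R) -> R) (i : nat)
    (x : nat -> option R) (l : R) : Prop :=
  match x i with
  | Some v => forall eps, 0 < eps -> exists delta, 0 < delta /\
      forall h, 0 < h < delta ->
        Rabs ((F (updx x i (v + h)) - F x) / h - l) < eps
  | None => False
  end.

Definition pt (x y : R) (z : nat -> R) : nat -> option R :=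
  fun i => match i with O => Some x | S O => Some y | _ => Some (z i) end.

Definition pt2 (x y : R) : nat -> option R :=
  fun i => match i with O => Some x | S O => Some y | _ => None end.

(* Main.v *)
Require Import Defs.
From Stdlib Require Import Reals Lra Lia FunctionalExtensionality.
Open Scope R_scope.

Ltac pt_cases :=
  cbv beta;
  repeat (match goal with
  | |- context [Nat.eq_dec ?a ?b] => destruct (Nat.eq_dec a b); try subst
  | |- context [Nat.leb ?a ?b] => destruct (Nat.leb_spec a b)
  | |- context [Nat.ltb ?a ?b] => destruct (Nat.ltb_spec a b)
  | |- context [Nat.eqb ?a ?b] => destruct (Nat.eqb_spec a b); try subst
  end; cbv beta iota delta [andb orb negb]); try reflexivity; try lia.

Lemma vol_zero k a b C u :
  (forall v, (forall i, (k <= i)%nat -> v i = u i) ->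
     (forall i, (i < k)%nat -> v i = a i \/ v i = b i) -> C v = 0) ->
  vol k a b C u = 0.
Proof.
  revert u; induction k as [|k IH]; intros u H; simpl.
  - apply H; intros; [reflexivity|lia].
  - assert (G : forall c, c = a k \/ c = b k -> vol k a b C (upd u k c) = 0).
    { intros c Hc. apply IH. intros v H1 H2. apply H.
      + intros i Hi. rewrite H1 by lia. unfold upd.
        destruct (Nat.eq_dec i k); [lia|auto].
      + intros i Hi. destruct (Nat.eq_dec i k).
        * subst. rewrite H1 by lia. unfold upd.
          destruct (Nat.eq_dec k k); [auto|congruence].
        * apply H2; lia. }
    rewrite (G (b k)), (G (a k)) by auto. ring.
Qed.

Fixpoint volg (k : nat) (m : nat -> bool) (a b : nat -> R) (C : (nat -> R) -> R) (u : nat -> R) : R :=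
  match k with
  | O => C u
  | S k' => if m k' then volg k' m a b C (upd u k' (b k')) - volg k' m a b C (upd u k' (a k'))
            else volg k' m a b C (upd u k' (b k'))
  end.

Lemma vol_volg d C k m a b u :
  (forall v, in_cube d v -> (exists i, (i < d)%nat /\ v i = 0) -> C v = 0) ->
  (k <= d)%nat -> in_cube d a -> in_cube d b ->
  (forall i, (i < k)%nat -> m i = false -> a i = 0) ->
  (forall i, (k <= i < d)%nat -> 0 <= u i <= 1) ->
  vol k a b C u = volg k m a b C u.
Proof.
  intros Hg. revert u; induction k as [|k IH]; intros u Hk Ha Hb Hm Hu; simpl; [reflexivity|].
  assert (Hu' : forall c, 0 <= c <= 1 -> forall i, (k <= i < d)%nat -> 0 <= upd u k c i <= 1).
  { intros c Hc i Hi. unfold upd. destruct (Nat.eq_dec i k); [auto| apply Hu; lia]. }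
  assert (Hm' : forall i, (i < k)%nat -> m i = false -> a i = 0) by (intros; apply Hm; auto; lia).
  rewrite (IH (upd u k (b k))) by (auto; lia || (apply Hu'; apply Hb; lia)).
  destruct (m k) eqn:E.
  - rewrite (IH (upd u k (a k))) by (auto; lia || (apply Hu'; apply Ha; lia)). reflexivity.
  - assert (Ak : a k = 0) by (apply Hm; auto).
    rewrite (vol_zero k a b C (upd u k (a k))). ring.
    intros v H1 H2. apply Hg.
    + intros i Hi. destruct (Nat.lt_ge_cases i k).
      * destruct (H2 i H) as [E'|E']; rewrite E'; [apply Ha|apply Hb]; lia.
      * rewrite H1 by lia. apply Hu'; [apply Ha; lia| lia].
    + exists k. split; [lia|]. rewrite H1 by lia. unfold upd.
      destruct (Nat.eq_dec k k); [auto|congruence].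
Qed.

Definition fillr (b : nat -> R) (lo k : nat) (u : nat -> R) : nat -> R :=
  fun i => if andb (Nat.leb lo i) (Nat.ltb i k) then b i else u i.

Lemma volg_fill m a b C lo n u :
  (forall i, (lo <= i < lo + n)%nat -> m i = false) ->
  volg (lo + n) m a b C u = volg lo m a b C (fillr b lo (lo+n) u).
Proof.
  revert u; induction n as [|n IH]; intros u Hm.
  - rewrite Nat.add_0_r. f_equal. extensionality i. unfold fillr. pt_cases.
  - rewrite Nat.add_succ_r. simpl. rewrite (Hm (lo+n)%nat) by lia.
    rewrite IH by (intros; apply Hm; lia). f_equal. extensionality i.
    unfold fillr, upd. pt_cases.
Qed.

Lemma volg_fill' m a b C lo k u : (lo <= k)%nat ->
  (forall i, (lo <= i < k)%nat -> m i = false) ->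
  volg k m a b C u = volg lo m a b C (fillr b lo k u).
Proof.
  intros H Hm. replace k with (lo + (k - lo))%nat by lia. apply volg_fill.
  intros; apply Hm; lia.
Qed.

Lemma volg_S_true k m a b C u : m k = true ->
  volg (S k) m a b C u = volg k m a b C (upd u k (b k)) - volg k m a b C (upd u k (a k)).
Proof. intros H; simpl; rewrite H; reflexivity. Qed.

Definition mk (p q : R) (v : nat -> R) := upd (upd v 1 q) 0 p.
Definition Q (C : (nat -> R) -> R) x0 x1 y0 y1 v :=
  C (mk x1 y1 v) - C (mk x0 y1 v) - C (mk x1 y0 v) + C (mk x0 y0 v).

Lemma volg2 m a b C w : m 0%nat = true -> m 1%nat = true ->
  volg 2 m a b C w = Q C (a 0%nat) (b 0%nat) (a 1%nat) (b 1%nat) w.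
Proof. intros H0 H1. simpl. rewrite H0, H1. unfold Q, mk. ring. Qed.

Lemma Q_ext d C x0 x1 y0 y1 w w' :
  (forall u v, (forall i, (i < d)%nat -> u i = v i) -> C u = C v) ->
  (forall i, (2 <= i < d)%nat -> w i = w' i) ->
  Q C x0 x1 y0 y1 w = Q C x0 x1 y0 y1 w'.
Proof.
  intros He Hw. unfold Q.
  assert (K : forall p q, C (mk p q w) = C (mk p q w')).
  { intros p q. apply He. intros i Hi. unfold mk, upd. pt_cases. apply Hw; lia. }
  rewrite !K. reflexivity.
Qed.

Lemma rect2 d C (hC : is_copula d C) (hd : (2 <= d)%nat) v (hv : in_cube d v)
  x0 x1 y0 y1 (hx : 0 <= x0 <= x1) (hx1 : x1 <= 1) (hy : 0 <= y0 <= y1) (hy1 : y1 <= 1) :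
  0 <= Q C x0 x1 y0 y1 v.
Proof.
  destruct hC as [Hext [Hgr [_ Hinc]]].
  set (a := mk x0 y0 (fun _ => 0)).
  set (b := mk x1 y1 v).
  set (m := fun i => Nat.ltb i 2).
  assert (Ha : in_cube d a). { intros i Hi. unfold a, mk, upd. pt_cases; lra. }
  assert (Hb : in_cube d b). { intros i Hi. unfold b, mk, upd. pt_cases; try lra; apply hv; lia. }
  assert (Hab : forall i, (i < d)%nat -> a i <= b i).
  { intros i Hi. unfold a, b, mk, upd. pt_cases; try lra. apply hv; lia. }
  pose proof (Hinc a b Ha Hb Hab) as H.
  rewrite (vol_volg d C d m a b a) in H; auto.
  2:{ intros i Hi Hm. unfold m in Hm. unfold a, mk, upd.
      destruct (Nat.ltb_spec i 2); [discriminate|]. pt_cases. }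
  2:{ intros; lia. }
  rewrite (volg_fill' m a b C 2 d) in H by (first [lia | intros i Hi; unfold m; pt_cases]).
  rewrite volg2 in H by reflexivity.
  replace (a 0%nat) with x0 in H by (unfold a, mk, upd; pt_cases).
  replace (a 1%nat) with y0 in H by (unfold a, mk, upd; pt_cases).
  replace (b 0%nat) with x1 in H by (unfold b, mk, upd; pt_cases).
  replace (b 1%nat) with y1 in H by (unfold b, mk, upd; pt_cases).
  rewrite (Q_ext d C x0 x1 y0 y1 _ v Hext) in H; auto.
  intros i Hi. unfold fillr, b, mk, upd. pt_cases.
Qed.

Lemma rect3 d C (hC : is_copula d C) j (hj : (2 <= j < d)%nat) v (hv : in_cube d v)
  x0 x1 y0 y1 c c' (hx : 0 <= x0 <= x1) (hx1 : x1 <= 1) (hy : 0 <= y0 <= y1) (hy1 : y1 <= 1)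
  (hc : 0 <= c <= c') (hc1 : c' <= 1) :
  Q C x0 x1 y0 y1 (upd v j c) <= Q C x0 x1 y0 y1 (upd v j c').
Proof.
  destruct hC as [Hext [Hgr [_ Hinc]]].
  set (a := mk x0 y0 (upd (fun _ => 0) j c)).
  set (b := mk x1 y1 (upd v j c')).
  set (m := fun i => orb (Nat.ltb i 2) (Nat.eqb i j)).
  assert (Ha : in_cube d a). { intros i Hi. unfold a, mk, upd. pt_cases; lra. }
  assert (Hb : in_cube d b). { intros i Hi. unfold b, mk, upd. pt_cases; try lra; apply hv; lia. }
  assert (Hab : forall i, (i < d)%nat -> a i <= b i).
  { intros i Hi. unfold a, b, mk, upd. pt_cases; try lra. apply hv; lia. }
  pose proof (Hinc a b Ha Hb Hab) as H.
  rewrite (vol_volg d C d m a b a) in H; auto.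
  2:{ intros i Hi Hm. unfold m in Hm. unfold a, mk, upd.
      destruct (Nat.ltb_spec i 2); [discriminate|].
      destruct (Nat.eqb_spec i j); [discriminate|]. pt_cases. }
  2:{ intros; lia. }
  rewrite (volg_fill' m a b C (S j) d) in H by (first [lia | intros i Hi; unfold m; pt_cases]).
  rewrite volg_S_true in H by (unfold m; pt_cases).
  rewrite (volg_fill' m a b C 2 j) in H by (first [lia | intros i Hi; unfold m; pt_cases]).
  rewrite (volg_fill' m a b C 2 j) in H by (first [lia | intros i Hi; unfold m; pt_cases]).
  rewrite !volg2 in H by reflexivity.
  replace (a 0%nat) with x0 in H by (unfold a, mk, upd; pt_cases).
  replace (a 1%nat) with y0 in H by (unfold a, mk, upd; pt_cases).
  replace (b 0%nat) with x1 in H by (unfold b, mk, upd; pt_cases).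
  replace (b 1%nat) with y1 in H by (unfold b, mk, upd; pt_cases).
  rewrite (Q_ext d C x0 x1 y0 y1 (fillr b 2 j (upd (fillr b (S j) d a) j (b j))) (upd v j c') Hext) in H.
  rewrite (Q_ext d C x0 x1 y0 y1 (fillr b 2 j (upd (fillr b (S j) d a) j (a j))) (upd v j c) Hext) in H.
  lra.
  all: intros i Hi; unfold fillr, a, b, mk, upd; pt_cases.
Qed.

Definition Wp (s : R) (z : nat -> R) (k : nat) : nat -> R :=
  fun i => if Nat.ltb i 2 then 0 else if Nat.ltb i k then s * z i else 1.

Lemma Wp_cube d s z k : (forall i, (2 <= i < d)%nat -> 0 <= s * z i <= 1) ->
  in_cube d (Wp s z k).
Proof. intros H i Hi. unfold Wp. pt_cases; try lra. apply H; lia. Qed.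

Lemma tele d C (hC : is_copula d C) s z (hzs : forall i, (2 <= i < d)%nat -> 0 <= s * z i <= 1)
  x0 x1 y0 y1 (hx : 0 <= x0 <= x1) (hx1 : x1 <= 1) (hy : 0 <= y0 <= y1) (hy1 : y1 <= 1) :
  forall n, (2 + n <= d)%nat ->
  Q C x0 x1 y0 y1 (Wp s z (2 + n)) <= Q C x0 x1 y0 y1 (Wp s z 2).
Proof.
  induction n as [|n IH]; intros Hn; [right; reflexivity|].
  eapply Rle_trans; [|apply IH; lia].
  pose proof (rect3 d C hC (2+n) ltac:(lia) (Wp s z (2 + S n)) (Wp_cube d s z _ hzs)
     x0 x1 y0 y1 (s * z (2+n)%nat) 1 hx hx1 hy hy1 ltac:(pose proof (hzs (2+n)%nat ltac:(lia)); lra) ltac:(lra)) as K.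
  assert (E1 : upd (Wp s z (2 + S n)) (2+n) 1 = Wp s z (2+n)) by (extensionality i; unfold upd, Wp; pt_cases).
  assert (E2 : upd (Wp s z (2 + S n)) (2+n) (s * z (2+n)%nat) = Wp s z (2+ S n)) by (extensionality i; unfold upd, Wp; pt_cases).
  rewrite E1, E2 in K. exact K.
Qed.

Definition lim0 (f : R -> R) (L : R) := forall eps, 0 < eps -> exists delta, 0 < delta /\
  forall t, 0 < t < delta -> Rabs (f t - L) < eps.

Lemma lim0_sub f g L M : lim0 f L -> lim0 g M -> lim0 (fun t => f t - g t) (L - M).
Proof.
  intros Hf Hg eps He.
  destruct (Hf (eps/2)) as [d1 [Hd1 H1]]; [lra|].
  destruct (Hg (eps/2)) as [d2 [Hd2 H2]]; [lra|].
  exists (Rmin d1 d2). split; [apply Rmin_pos; auto|].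
  intros t Ht. pose proof (Rmin_l d1 d2). pose proof (Rmin_r d1 d2).
  pose proof (H1 t ltac:(lra)) as A. pose proof (H2 t ltac:(lra)) as B.
  apply Rabs_def2 in A. apply Rabs_def2 in B. apply Rabs_def1; lra.
Qed.

Lemma lim0_ge0 f L : lim0 f L -> (exists d0, 0 < d0 /\ forall t, 0 < t < d0 -> 0 <= f t) -> 0 <= L.
Proof.
  intros Hf [d0 [Hd0 H0]]. destruct (Rle_lt_dec 0 L) as [|HL]; auto.
  destruct (Hf (-L)) as [d1 [Hd1 H1]]; [lra|].
  set (t := Rmin d0 d1 / 2).
  assert (0 < Rmin d0 d1) by (apply Rmin_pos; auto).
  pose proof (Rmin_l d0 d1). pose proof (Rmin_r d0 d1).
  pose proof (H0 t ltac:(unfold t; lra)). pose proof (H1 t ltac:(unfold t; lra)) as A.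
  apply Rabs_def2 in A. lra.
Qed.

Fixpoint zs (z : nat -> R) (n : nat) : R :=
  match n with O => 0 | S n => zs z n + Rabs (z n) end.

Lemma zs_nonneg z n : 0 <= zs z n.
Proof. induction n; simpl; [lra|]. pose proof (Rabs_pos (z n)); lra. Qed.

Lemma zs_ge z n i : (i < n)%nat -> Rabs (z i) <= zs z n.
Proof.
  induction n; intros H; [lia|]. simpl. destruct (Nat.eq_dec i n).
  - subst. pose proof (zs_nonneg z n). lra.
  - pose proof (IHn ltac:(lia)). pose proof (Rabs_pos (z n)). lra.
Qed.

Lemma div_comb4 s c1 c2 c3 c4 : 0 < s -> 0 <= c1 - c2 - c3 + c4 ->
  0 <= (c1/s - c2/s) - (c3/s - c4/s).
Proof.
  intros Hs H. replace ((c1/s - c2/s) - (c3/s - c4/s)) with ((c1 - c2 - c3 + c4) * /s)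
    by (unfold Rdiv; ring).
  apply Rmult_le_pos; [lra|left; apply Rinv_0_lt_compat; lra].
Qed.

Lemma div_comb2 t p q : 0 < t -> 0 <= p - q -> 0 <= p/t - q/t.
Proof.
  intros Ht H. replace (p/t - q/t) with ((p - q) * /t) by (unfold Rdiv; ring).
  apply Rmult_le_pos; [lra|left; apply Rinv_0_lt_compat; lra].
Qed.

Definition df (Rt : (nat -> option R) -> R) (e : nat -> option R) (x h : R) :=
  Rt (updx e 0 (x + h)) - Rt e.

Theorem lemmaA7 (d : nat) (Rt : (nat -> option R) -> R)
  (hd : (2 <= d)%nat)
  (hR : is_tail_copula d Rt)
  (hderiv : forall (x : nat -> option R) (i : nat),
      nonneg_ext d x -> not_all_inf d x -> (i < d)%nat -> x i <> None ->
      exists l, has_right_pderiv Rt i x l)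
  (g x y : R) (z : nat -> R)
  (hg : 0 < g) (hx : 0 <= x) (hy : 0 <= y)
  (hz : forall i, (2 <= i < d)%nat -> 0 <= z i)
  (l1 l2 l3 l4 : R)
  (h1 : has_right_pderiv Rt 0 (pt x y z) l1)
  (h2 : has_right_pderiv Rt 0 (pt x (y + g) z) l2)
  (h3 : has_right_pderiv Rt 0 (pt2 x y) l3)
  (h4 : has_right_pderiv Rt 0 (pt2 x (y + g)) l4) :
  0 <= l2 - l1 <= l4 - l3.
Proof.
  destruct hR as [C [hC hlim]].
  pose proof hC as hC'. destruct hC' as [Hext [Hgr [_ Hinc]]].
  assert (Hadm : forall e, e 0%nat <> None -> nonneg_ext d e ->
            lim0 (fun s => C (fun i => cval s (e i)) / s) (Rt e)).
  { intros e H0 Hn. assert (Hd0 : (0 < d)%nat) by lia. exact (hlim e Hn (ex_intro _ 0%nat (conj Hd0 H0))). }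
  assert (NNpt : forall a b, 0 <= a -> 0 <= b -> nonneg_ext d (pt a b z)).
  { intros a b Ha Hb i Hi. destruct i as [|[|i]]; simpl; auto. apply hz; lia. }
  assert (NNpt2 : forall a b, 0 <= a -> 0 <= b -> nonneg_ext d (pt2 a b)).
  { intros a b Ha Hb i Hi. destruct i as [|[|i]]; simpl; auto. }
  assert (NNu : forall e v, nonneg_ext d e -> 0 <= v -> nonneg_ext d (updx e 0 v)).
  { intros e v He Hv i Hi. unfold updx. destruct (Nat.eq_dec i 0); [exact Hv | apply He; exact Hi]. }
  assert (Cpt : forall s a b, C (fun i => cval s (pt a b z i)) = C (mk (s*a) (s*b) (Wp s z d))).
  { intros s a b. apply Hext. intros i Hi. unfold mk, upd, Wp.
    destruct i as [|[|i]]; simpl; pt_cases. }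
  assert (Cptu : forall s a b v, C (fun i => cval s (updx (pt a b z) 0 v i)) = C (mk (s*v) (s*b) (Wp s z d))).
  { intros s a b v. apply Hext. intros i Hi. unfold mk, upd, Wp, updx.
    destruct i as [|[|i]]; simpl; pt_cases. }
  assert (Cpt2 : forall s a b, C (fun i => cval s (pt2 a b i)) = C (mk (s*a) (s*b) (Wp s z 2))).
  { intros s a b. apply Hext. intros i Hi. unfold mk, upd, Wp.
    destruct i as [|[|i]]; simpl; pt_cases. }
  assert (Cpt2u : forall s a b v, C (fun i => cval s (updx (pt2 a b) 0 v i)) = C (mk (s*v) (s*b) (Wp s z 2))).
  { intros s a b v. apply Hext. intros i Hi. unfold mk, upd, Wp, updx.
    destruct i as [|[|i]]; simpl; pt_cases. }
  assert (KEY : forall h, 0 < h ->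
     0 <= df Rt (pt x (y+g) z) x h - df Rt (pt x y z) x h /\
     0 <= (df Rt (pt2 x (y+g)) x h - df Rt (pt2 x y) x h)
          - (df Rt (pt x (y+g) z) x h - df Rt (pt x y z) x h)).
  { intros h Hh.
    set (M := Rabs (x+h) + Rabs (y+g) + zs z d).
    assert (HM : 0 <= M) by (unfold M; pose proof (zs_nonneg z d);
       pose proof (Rabs_pos (x+h)); pose proof (Rabs_pos (y+g)); lra).
    assert (Hxh : x + h <= M) by (unfold M; pose proof (Rle_abs (x+h)); pose proof (zs_nonneg z d);
       pose proof (Rabs_pos (y+g)); lra).
    assert (Hyg : y + g <= M) by (unfold M; pose proof (Rle_abs (y+g)); pose proof (zs_nonneg z d);
       pose proof (Rabs_pos (x+h)); lra).
    assert (Hzi : forall i, (i < d)%nat -> z i <= M).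
    { intros i Hi. unfold M. pose proof (Rle_abs (z i)). pose proof (zs_ge z d i Hi).
      pose proof (Rabs_pos (y+g)); pose proof (Rabs_pos (x+h)); lra. }
    assert (SM : forall s, 0 < s < / (1 + M) -> s * M < 1).
    { intros s Hs. assert (s * (1 + M) < 1).
      { replace 1 with (/ (1+M) * (1+M)) at 2 by (field; lra).
        apply Rmult_lt_compat_r; lra. }
      lra. }
    assert (Small : forall s, 0 < s < / (1 + M) ->
       (forall i, (2 <= i < d)%nat -> 0 <= s * z i <= 1) /\
       s * (x + h) <= 1 /\ s * (y+g) <= 1 /\ 0 <= s * x <= s * (x+h) /\ 0 <= s * y <= s * (y+g)).
    { intros s Hs. pose proof (SM s Hs).
      split; [intros i Hi; pose proof (hz i Hi); pose proof (Hzi i ltac:(lia)); split; nra|].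
      split; [nra|]. split; [nra|]. split; nra. }
    assert (Hd0 : 0 < / (1 + M)) by (apply Rinv_0_lt_compat; lra).
    assert (Hyg0 : 0 <= y + g) by lra. assert (Hxh0 : 0 <= x + h) by lra.
    assert (L1 := Hadm (updx (pt x (y+g) z) 0 (x+h)) ltac:(discriminate)
                   (NNu _ _ (NNpt _ _ hx Hyg0) Hxh0)).
    assert (L2 := Hadm (pt x (y+g) z) ltac:(discriminate) (NNpt _ _ hx Hyg0)).
    assert (L3 := Hadm (updx (pt x y z) 0 (x+h)) ltac:(discriminate)
                   (NNu _ _ (NNpt _ _ hx hy) Hxh0)).
    assert (L4 := Hadm (pt x y z) ltac:(discriminate) (NNpt _ _ hx hy)).
    assert (P1 := Hadm (updx (pt2 x (y+g)) 0 (x+h)) ltac:(discriminate)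
                   (NNu _ _ (NNpt2 _ _ hx Hyg0) Hxh0)).
    assert (P2 := Hadm (pt2 x (y+g)) ltac:(discriminate) (NNpt2 _ _ hx Hyg0)).
    assert (P3 := Hadm (updx (pt2 x y) 0 (x+h)) ltac:(discriminate)
                   (NNu _ _ (NNpt2 _ _ hx hy) Hxh0)).
    assert (P4 := Hadm (pt2 x y) ltac:(discriminate) (NNpt2 _ _ hx hy)).
    pose proof (lim0_sub _ _ _ _ (lim0_sub _ _ _ _ L1 L2) (lim0_sub _ _ _ _ L3 L4)) as LA.
    pose proof (lim0_sub _ _ _ _ (lim0_sub _ _ _ _ (lim0_sub _ _ _ _ P1 P2) (lim0_sub _ _ _ _ P3 P4))
        (lim0_sub _ _ _ _ (lim0_sub _ _ _ _ L1 L2) (lim0_sub _ _ _ _ L3 L4))) as LB.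
    split.
    - apply (lim0_ge0 _ _ LA). exists (/ (1+M)). split; [exact Hd0|].
      intros s Hs. cbv beta. destruct (Small s Hs) as [Hs1 [Hs2 [Hs3 [Hs4 Hs5]]]].
      rewrite Cptu, Cpt, Cptu, Cpt. apply div_comb4; [lra|].
      pose proof (rect2 d C hC hd (Wp s z d) (Wp_cube d s z d Hs1) (s*x) (s*(x+h)) (s*y) (s*(y+g))
        Hs4 Hs2 Hs5 Hs3) as K. unfold Q in K. lra.
    - apply (lim0_ge0 _ _ LB). exists (/ (1+M)). split; [exact Hd0|].
      intros s Hs. cbv beta. destruct (Small s Hs) as [Hs1 [Hs2 [Hs3 [Hs4 Hs5]]]].
      rewrite Cptu, Cpt, Cptu, Cpt, Cpt2u, Cpt2, Cpt2u, Cpt2.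
      pose proof (tele d C hC s z Hs1 (s*x) (s*(x+h)) (s*y) (s*(y+g)) Hs4 Hs2 Hs5 Hs3 (d-2)
        ltac:(lia)) as K.
      replace (2 + (d-2))%nat with d in K by lia. unfold Q in K.
      replace (((C (mk (s * (x + h)) (s * (y + g)) (Wp s z 2)) / s -
     C (mk (s * x) (s * (y + g)) (Wp s z 2)) / s) -
    (C (mk (s * (x + h)) (s * y) (Wp s z 2)) / s -
     C (mk (s * x) (s * y) (Wp s z 2)) / s)) -
   ((C (mk (s * (x + h)) (s * (y + g)) (Wp s z d)) / s -
     C (mk (s * x) (s * (y + g)) (Wp s z d)) / s) -
    (C (mk (s * (x + h)) (s * y) (Wp s z d)) / s -
     C (mk (s * x) (s * y) (Wp s z d)) / s))) with
       (((C (mk (s * (x + h)) (s * (y + g)) (Wp s z 2)) - C (mk (s * (x + h)) (s * (y + g)) (Wp s z d)))/s -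
         (C (mk (s * x) (s * (y + g)) (Wp s z 2)) - C (mk (s * x) (s * (y + g)) (Wp s z d)))/s) -
        ((C (mk (s * (x + h)) (s * y) (Wp s z 2)) - C (mk (s * (x + h)) (s * y) (Wp s z d)))/s -
         (C (mk (s * x) (s * y) (Wp s z 2)) - C (mk (s * x) (s * y) (Wp s z d)))/s))
       by (field; lra).
      apply div_comb4; [lra|]. lra. }
  assert (D1 : lim0 (fun h => df Rt (pt x y z) x h / h) l1) by exact h1.
  assert (D2 : lim0 (fun h => df Rt (pt x (y+g) z) x h / h) l2) by exact h2.
  assert (D3 : lim0 (fun h => df Rt (pt2 x y) x h / h) l3) by exact h3.
  assert (D4 : lim0 (fun h => df Rt (pt2 x (y+g)) x h / h) l4) by exact h4.
  split.
  - apply (lim0_ge0 _ _ (lim0_sub _ _ _ _ D2 D1)). exists 1. split; [lra|].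
    intros t Ht. cbv beta. apply div_comb2; [lra|]. apply KEY; lra.
  - cut (0 <= (l4 - l3) - (l2 - l1)); [lra|].
    apply (lim0_ge0 _ _ (lim0_sub _ _ _ _ (lim0_sub _ _ _ _ D4 D3) (lim0_sub _ _ _ _ D2 D1))).
    exists 1. split; [lra|]. intros t Ht. cbv beta.
    destruct (KEY t ltac:(lra)) as [_ K].
    replace (df Rt (pt2 x (y + g)) x t / t - df Rt (pt2 x y) x t / t -
      (df Rt (pt x (y + g) z) x t / t - df Rt (pt x y z) x t / t)) with
      ((df Rt (pt2 x (y + g)) x t - df Rt (pt2 x y) x t - (df Rt (pt x (y + g) z) x t - df Rt (pt x y z) x t)) * / t)
      by (field; lra).
    apply Rmult_le_pos; [lra|left; apply Rinv_0_lt_compat; lra].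
Qed.
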